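(* Let $(R,\mathfrak{m})$ be a Noetherian local ring, $M$ a finitely generated $R$-module, and $S \subseteq M$ a subset. Let $I(S,M) := \{y \in \langle S \rangle \mid f(y) \in \mathfrak{m} \text{ for all } f \in \mathrm{Hom}_R(M,R)\}$, an $R$-submodule of $\langle S \rangle$. Then $\delta_\mathfrak{m}(S,M) = \lambda_R(\langle S \rangle / I(S,M))$, where $\lambda_R$ denotes length.
   Context: $\langle S\rangle$ denotes the $R$-submodule of $M$ generated by $S$. $\delta_\mathfrak{m}(S,M)$ is the largest integer $n \ge 0$ such that there is a free $R$-submodule $G \subseteq \langle S\rangle$ of rank $n$ which is a direct summand of $M$. *)

(* Defs.v *)
From HB Require Import structures.
From mathcomp Require Import all_boot all_order all_algebra.
Set Implicit Arguments. Unset Strict Implicit. Unset Printing Implicit Defensive.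
Import GRing.Theory.
Local Open Scope ring_scope.

Section CommAlg.
Variable R : comNzRingType.

Definition is_ideal (I : R -> Prop) : Prop :=
  [/\ I 0, (forall x y, I x -> I y -> I (x + y)) & (forall r x, I x -> I (r * x))].

Definition ideal_span n (a : 'I_n -> R) (x : R) : Prop :=
  exists c : 'I_n -> R, x = \sum_(i < n) c i * a i.

Definition noetherian_ring : Prop :=
  forall I : R -> Prop, is_ideal I ->
    exists n (a : 'I_n -> R), forall x, I x <-> ideal_span a x.

Definition is_maximal_ideal (m : R -> Prop) : Prop :=
  [/\ is_ideal m, ~ m 1 &
      forall J : R -> Prop, is_ideal J -> (forall x, m x -> J x) ->
        (forall x, J x <-> m x) \/ J 1].

Definition local_ring (m : R -> Prop) : Prop :=
  is_maximal_ideal m /\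
  forall J : R -> Prop, is_maximal_ideal J -> forall x, J x <-> m x.

Variable M : lmodType R.

Definition is_submod (N : M -> Prop) : Prop :=
  [/\ N 0, (forall x y, N x -> N y -> N (x + y)) & (forall r x, N x -> N (r *: x))].

Definition gen (S : M -> Prop) (x : M) : Prop :=
  exists n (v : 'I_n -> M) (c : 'I_n -> R),
    (forall i, S (v i)) /\ x = \sum_(i < n) c i *: v i.

Definition fin_gen_mod : Prop :=
  exists n (v : 'I_n -> M), forall x, gen (fun y => exists i, y = v i) x.

Definition is_RHom (f : M -> R) : Prop :=
  (forall x y, f (x + y) = f x + f y) /\ (forall r x, f (r *: x) = r * f x).

Definition ISM (m : R -> Prop) (S : M -> Prop) (y : M) : Prop :=
  gen S y /\ forall f : M -> R, is_RHom f -> m (f y).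

Definition sub_strict (A B : M -> Prop) : Prop :=
  (forall x, A x -> B x) /\ exists x, B x /\ ~ A x.

(* a chain L <= N_0 < N_1 < ... < N_n <= N of submodules, i.e. a chain of
   length n of submodules of N/L *)
Definition chain_between (L N : M -> Prop) (n : nat) : Prop :=
  exists C : nat -> (M -> Prop),
    [/\ forall i, (i <= n)%N -> is_submod (C i),
        forall i, (i <= n)%N -> forall x, L x -> C i x,
        forall i, (i <= n)%N -> forall x, C i x -> N x &
        forall i, (i < n)%N -> sub_strict (C i) (C i.+1)].

Definition quot_length_is (L N : M -> Prop) (n : nat) : Prop :=
  chain_between L N n /\ forall k, chain_between L N k -> (k <= n)%N.

(* there is a free R-submodule G <= <S> of rank n (basis v of size n)
   that is a direct summand of M *)
Definition free_summand_in (S : M -> Prop) (n : nat) : Prop :=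
  exists v : 'I_n -> M,
    [/\ (forall c : 'I_n -> R, \sum_(i < n) c i *: v i = 0 -> forall i, c i = 0),
        (forall i, gen S (v i)) &
        exists K : M -> Prop,
          [/\ is_submod K,
              (forall x, exists g k, [/\ gen (fun y => exists i, y = v i) g, K k & x = g + k]) &
              (forall x, gen (fun y => exists i, y = v i) x -> K x -> x = 0)]].

Definition delta_is (S : M -> Prop) (n : nat) : Prop :=
  free_summand_in S n /\ forall k, free_summand_in S k -> (k <= n)%N.

End CommAlg.

(* Main.v *)
Require Import Defs.
From HB Require Import structures.
From mathcomp Require Import all_boot all_order all_algebra.
From Stdlib Require Import Classical ClassicalEpsilon IndefiniteDescription.
Set Implicit Arguments. Unset Strict Implicit. Unset Printing Implicit Defensive.
Import GRing.Theory.
Local Open Scope ring_scope.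



Lemma hom0 {R : comNzRingType} {M : lmodType R} (f : M -> R) :
  is_RHom f -> f 0 = 0.
Proof. by case=> _ hZ; rewrite -(scale0r (0:M)) hZ mul0r. Qed.

Lemma homN {R : comNzRingType} {M : lmodType R} (f : M -> R) x :
  is_RHom f -> f (- x) = - f x.
Proof. by case=> _ hZ; rewrite -scaleN1r hZ mulN1r. Qed.

Lemma homB {R : comNzRingType} {M : lmodType R} (f : M -> R) x y :
  is_RHom f -> f (x - y) = f x - f y.
Proof. by move=> hf; rewrite hf.1 homN. Qed.

Lemma hom_sum {R : comNzRingType} {M : lmodType R} (f : M -> R) n (F : 'I_n -> M) :
  is_RHom f -> f (\sum_(i < n) F i) = \sum_(i < n) f (F i).
Proof.
move=> hf; apply: (big_rec2 (fun a b => f a = b)); first exact: hom0.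
by move=> i a b _ <-; rewrite hf.1.
Qed.

Lemma submod_sum {R : comNzRingType} {M : lmodType R} (P : M -> Prop) n (F : 'I_n -> M) :
  is_submod P -> (forall i, P (F i)) -> P (\sum_(i < n) F i).
Proof. by case=> h0 hD _ hF; apply: big_ind. Qed.

Lemma submodB {R : comNzRingType} {M : lmodType R} (P : M -> Prop) x y :
  is_submod P -> P x -> P y -> P (x - y).
Proof. by case=> h0 hD hZ hx hy; apply: hD => //; rewrite -scaleN1r; apply: hZ. Qed.

Lemma ideal_sum {R : comNzRingType} (J : R -> Prop) n (c a : 'I_n -> R) :
  is_ideal J -> (forall i, J (a i)) -> J (\sum_(i < n) c i * a i).
Proof. by case=> h0 hD hM ha; apply: big_ind => // i _; apply: hM. Qed.

Lemma delta_sum {R : comNzRingType} k (F : nat -> R) i : (i < k)%N ->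
  \sum_(j < k) F j * (i == j :> nat)%:R = F i.
Proof.
move=> Hi; rewrite (bigD1 (Ordinal Hi)) //= eqxx mulr1 big1 ?addr0 //.
move=> j; rewrite -val_eqE /= eq_sym => /negbTE ->; by rewrite mulr0.
Qed.

Lemma delta_sum' {R : comNzRingType} k (F : nat -> R) i : (i < k)%N ->
  \sum_(j < k) F j * (j == i :> nat)%:R = F i.
Proof.
move=> Hi; rewrite -(delta_sum F Hi); apply: eq_bigr => j _; by rewrite eq_sym.
Qed.

Lemma delta_sum_ord {R : comNzRingType} k (F : 'I_k -> R) i :
  \sum_(j < k) (j == i)%:R * F j = F i.
Proof.
rewrite (bigD1 i) //= eqxx mul1r big1 ?addr0 // => j /negbTE ->; by rewrite mul0r.
Qed.

Lemma gen_in {R : comNzRingType} {M : lmodType R} (S : M -> Prop) x : S x -> gen S x.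
Proof.
move=> Sx; exists 1%N, (fun _ => x), (fun _ => 1); split => //.
by rewrite big_ord1 scale1r.
Qed.

Lemma gen_submod {R : comNzRingType} {M : lmodType R} (S : M -> Prop) : is_submod (gen S).
Proof.
split.
- by exists 0%N, (fun _ => 0), (fun _ => 0); split => [[]//|]; rewrite big_ord0.
- move=> x y [p [u [c [Hu ->]]]] [q [u' [c' [Hu' ->]]]].
  exists (p + q)%N, (fun i => match split i with inl a => u a | inr b => u' b end),
    (fun i => match split i with inl a => c a | inr b => c' b end); split.
  + by move=> i; case: (split i).
  + by rewrite big_split_ord /=; congr (_ + _); apply: eq_bigr => i _;
      rewrite (unsplitK (inl _)) || rewrite (unsplitK (inr _)).
- move=> r x [p [u [c [Hu ->]]]]; exists p, u, (fun i => r * c i); split => //.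
  by rewrite scaler_sumr; apply: eq_bigr => i _; rewrite scalerA.
Qed.

Lemma gen_fam {R : comNzRingType} {M : lmodType R} n (v : 'I_n -> M) x :
  gen (fun y => exists i, y = v i) x -> exists d : 'I_n -> R, x = \sum_(i < n) d i *: v i.
Proof.
move=> [p [u [c [Hu ->]]]].
have [phi Hphi] := functional_choice _ Hu.
exists (fun l => \sum_(j < p | phi j == l) c j).
rewrite (partition_big phi xpredT) //=; apply: eq_bigr => l _.
rewrite scaler_suml; apply: eq_bigr => j /eqP <-; by rewrite Hphi.
Qed.



Lemma exists_maximal {R : comNzRingType} (J0 : R -> Prop) :
  noetherian_ring R -> is_ideal J0 -> ~ J0 1 ->
  exists J, is_maximal_ideal J /\ forall x, J0 x -> J x.
Proof.
move=> noeth iJ0 nJ0; apply: NNPP => Hno.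
pose good (J : R -> Prop) := [/\ is_ideal J, ~ J 1 & forall x, J0 x -> J x].
have step : forall J, good J -> exists J', good J' /\ (forall x, J x -> J' x) /\
                                  exists x, J' x /\ ~ J x.
  move=> J [iJ nJ sJ]; apply: NNPP => Hst; apply: Hno; exists J; split => //.
  split => // J' iJ' sJ'; apply: NNPP => H; apply: Hst; exists J'.
  have nJ' : ~ J' 1 by move=> h; apply: H; right.
  split; first by split => // x /sJ /sJ'.
  split => //; apply: NNPP => h; apply: H; left => x; split; last exact: sJ'.
  move=> J'x; apply: NNPP => nJx; apply: h; by exists x.
pose next (J : R -> Prop) := epsilon (inhabits J) (fun J' => good J -> good J' /\ (forall x, J x -> J' x) /\
                                  exists x, J' x /\ ~ J x).
have nextP : forall J, good J -> good (next J) /\ (forall x, J x -> next J x) /\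
                                  exists x, next J x /\ ~ J x.
  move=> J gJ; apply: (epsilon_spec (inhabits J) (fun J' => good J -> good J' /\ (forall x, J x -> J' x) /\
                                  exists x, J' x /\ ~ J x)) => //.
  have [J' HJ'] := step J gJ; by exists J'.
pose C n := iter n next J0.
have gC : forall n, good (C n).
  elim=> [|n IH]; first by split.
  exact: (nextP _ IH).1.
have monoC : forall i j, (i <= j)%N -> forall x, C i x -> C j x.
  move=> i j /subnK <-; elim: (j - i)%N => [//|d IH] x /IH h.
  by rewrite addSn; apply: (nextP _ (gC _)).2.1.
pose U x := exists n, C n x.
have iU : is_ideal U.
  split.
  - by exists 0%N; case: (gC 0%N) => [[h0 _ _] _ _].
  - move=> x y [a xa] [b yb]; exists (maxn a b); case: (gC (maxn a b)) => [[_ hD _] _ _].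
    by apply: hD; [apply: (monoC a) => //; rewrite leq_maxl | apply: (monoC b) => //; rewrite leq_maxr].
  - move=> r x [a xa]; exists a; case: (gC a) => [[_ _ hM] _ _]; exact: hM.
have [p [a Ha]] := noeth U iU.
have aU : forall i, exists n, C n (a i).
  move=> i; apply/Ha; exists (fun j => (j == i)%:R); by rewrite delta_sum_ord.
have [nf Hnf] := functional_choice _ aU.
pose N := (\max_(i < p) nf i)%N.
have [_ [_ [x [xN1 nxN]]]] := nextP _ (gC N).
apply: nxN; have : U x by exists N.+1.
move/Ha => [c ->]; apply: ideal_sum; first by case: (gC N).
move=> i; apply: (monoC (nf i)) => //; exact: leq_bigmax.
Qed.

Lemma local_unit {R : comNzRingType} (m : R -> Prop) (c : R) :
  noetherian_ring R -> local_ring m -> ~ m c -> exists w, w * c = 1.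
Proof.
move=> noeth [mm loc] nmc; apply: NNPP => Hno.
pose J0 x := exists r, x = r * c.
have iJ0 : is_ideal J0.
  split; first by exists 0; rewrite mul0r.
  - by move=> x y [r ->] [s ->]; exists (r + s); rewrite mulrDl.
  - by move=> r x [s ->]; exists (r * s); rewrite mulrA.
have nJ0 : ~ J0 1 by move=> [r h]; apply: Hno; exists r.
have [J [mJ sJ]] := exists_maximal noeth iJ0 nJ0.
apply: nmc; apply/(loc J mJ); apply: sJ; exists 1; by rewrite mul1r.
Qed.



Definition dual_fam {R : comNzRingType} {M : lmodType R} (S : M -> Prop) (k : nat) :=
  exists (v : nat -> M) (f : nat -> M -> R),
    [/\ forall j, (j < k)%N -> gen S (v j),
        forall i, (i < k)%N -> is_RHom (f i) &
        forall i j, (i < k)%N -> (j < k)%N -> f i (v j) = (i == j)%:R].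

Lemma dual_free {R : comNzRingType} {M : lmodType R} (S : M -> Prop) k :
  dual_fam S k -> free_summand_in S k.
Proof.
move=> [v [f [Hg Hh Hd]]].
have Hd' : forall (i : 'I_k) (c : 'I_k -> R), f i (\sum_(j < k) c j *: v j) = c i.
  move=> i c; rewrite hom_sum; last exact: Hh.
  rewrite -[RHS](delta_sum_ord c i); apply: eq_bigr => j _.
  by rewrite (Hh _ (ltn_ord i)).2 Hd // mulrC eq_sym.
exists (fun i => v i); split.
- move=> c Hc i; by rewrite -(Hd' i c) Hc hom0 //; apply: Hh.
- move=> i; exact: Hg.
exists (fun x => forall i, (i < k)%N -> f i x = 0); split.
- split.
  + by move=> i Hi; rewrite hom0 //; apply: Hh.
  + by move=> x y Hx Hy i Hi; rewrite (Hh _ Hi).1 Hx ?Hy ?addr0.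
  + by move=> r x Hx i Hi; rewrite (Hh _ Hi).2 Hx ?mulr0.
- move=> x; exists (\sum_(j < k) f j x *: v j), (x - \sum_(j < k) f j x *: v j); split.
  + exists k, (fun i => v i), (fun j => f j x); split => //; by move=> i; exists i.
  + move=> i Hi; rewrite homB; last exact: Hh.
    by rewrite (Hd' (Ordinal Hi) (fun j => f j x)) subrr.
  + by rewrite addrC subrK.
- move=> x /gen_fam [d ->] Hk.
  rewrite big1 // => i _.
  by rewrite -(Hd' i d) Hk // scale0r.
Qed.

Lemma ISM_submod {R : comNzRingType} {M : lmodType R} (m : R -> Prop) (S : M -> Prop) :
  is_ideal m -> is_submod (ISM m S).
Proof.
move=> [m0 mD mM]; have [g0 gD gZ] := gen_submod S; split.
- by split => // f hf; rewrite hom0.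
- by move=> x y [gx mx] [gy my]; split; [exact: gD|move=> f hf; rewrite hf.1; apply: mD; [apply: mx|apply: my]].
- by move=> r x [gx mx]; split; [exact: gZ|move=> f hf; rewrite hf.2; apply: mM; apply: mx].
Qed.

Lemma dual_chain {R : comNzRingType} {M : lmodType R} (m : R -> Prop) (S : M -> Prop) k :
  local_ring m -> dual_fam S k -> chain_between (ISM m S) (gen S) k.
Proof.
move=> [[im nm1 _] _] [v [f [Hg Hh Hd]]].
have iI := ISM_submod S im.
have [g0 gD gZ] := gen_submod S.
have [i0 iD iZ] := iI.
pose C (j : nat) (x : M) := exists y (d : nat -> R), ISM m S y /\ x = y + \sum_(l < j) d l *: v l.
exists C; split.
- move=> j _; split.
  + exists 0, (fun _ => 0); split => //; by rewrite add0r big1 // => l _; rewrite scale0r.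
  + move=> x y [a [d [Ia ->]]] [b [e [Ib ->]]]; exists (a + b), (fun l => d l + e l); split; first exact: iD.
    by rewrite addrACA -big_split /=; congr (_ + _); apply: eq_bigr => l _; rewrite scalerDl.
  + move=> r x [a [d [Ia ->]]]; exists (r *: a), (fun l => r * d l); split; first exact: iZ.
    by rewrite scalerDr scaler_sumr; congr (_ + _); apply: eq_bigr => l _; rewrite scalerA.
- move=> j _ x Ix; exists x, (fun _ => 0); split => //; by rewrite big1 ?addr0 // => l _; rewrite scale0r.
- move=> j Hj x [y [d [[gy _] ->]]]; apply: gD => //; apply: submod_sum => [|l]; first exact: gen_submod.
  by apply: gZ; apply: Hg; apply: leq_trans Hj.
- move=> j Hj; split.
  + move=> x [y [d [Iy ->]]]; exists y, (fun l => if (l < j)%N then d l else 0); split => //.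
    rewrite big_ord_recr /= ltnn scale0r addr0; congr (_ + _); apply: eq_bigr => l _.
    by rewrite ltn_ord.
  + exists (v j); split.
    * exists 0, (fun l => (l == j)%:R); split => //.
      by rewrite add0r big_ord_recr /= eqxx scale1r big1 ?add0r // => l _; rewrite (ltn_eqF (ltn_ord l)) scale0r.
    * move=> [y [d [[_ my] Hy]]]; apply: nm1.
      have := congr1 (f j) Hy; rewrite (Hh _ Hj).1 hom_sum; last exact: Hh.
      rewrite Hd // eqxx big1 ?addr0.
        move=> h; have -> : (1 : R) = f j y by rewrite -h.
        by apply: my; apply: Hh.
      move=> l _; rewrite (Hh _ Hj).2 Hd //; last exact: ltn_trans Hj.
      by rewrite (gtn_eqF (ltn_ord l)) mulr0.
Qed.

Definition ext {T : Type} n (F : 'I_n -> T) (d : T) (j : nat) : T :=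
  if insub j is Some i then F i else d.

Lemma extE {T : Type} n (F : 'I_n -> T) d (i : 'I_n) : ext F d i = F i.
Proof. by rewrite /ext valK. Qed.

Lemma extE' {T : Type} n (F : 'I_n -> T) d j (Hj : (j < n)%N) : ext F d j = F (Ordinal Hj).
Proof. by rewrite -[j]/(nat_of_ord (Ordinal Hj)) extE. Qed.

Lemma free_dual {R : comNzRingType} {M : lmodType R} (S : M -> Prop) n :
  free_summand_in S n -> dual_fam S n.
Proof.
move=> [v [Hind Hg [K [[k0 kD kZ] Hdec Hint]]]].
have dec : forall x, exists d : 'I_n -> R, exists kk, K kk /\ x = \sum_i d i *: v i + kk.
  move=> x; have [g [kk [gg Kk ->]]] := Hdec x; have [d ->] := gen_fam gg; by exists d, kk.
have uniq : forall d d' kk kk', K kk -> K kk' ->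
    \sum_i d i *: v i + kk = \sum_i d' i *: v i + kk' -> forall i, d i = d' i.
  move=> d d' kk kk' Kk Kk' E i; apply/eqP; rewrite -subr_eq0; apply/eqP; move: i; apply: Hind.
  have E2 : \sum_i (d i - d' i) *: v i = kk' - kk.
    rewrite (eq_bigr (fun i => d i *: v i - d' i *: v i)) => [|i _]; last by rewrite scalerBl.
    rewrite sumrB.
    have -> : \sum_i d i *: v i = \sum_i d' i *: v i + kk' - kk by rewrite -E addrK.
    by rewrite addrAC [\sum_i d' i *: v i + kk']addrC addrK.
  apply: Hint; last by rewrite E2; apply: submodB.
  exists n, v, (fun i => d i - d' i); split => //; by move=> i; exists i.
have [D HD] := functional_choice _ dec.
have homD : forall i, is_RHom (fun x => D x i).
  move=> i; split.
  - move=> x y; have [kx [Kx Ex]] := HD x; have [ky [Ky Ey]] := HD y.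
    have [kxy [Kxy Exy]] := HD (x + y).
    apply: (uniq _ (fun i => D x i + D y i) _ (kx + ky) Kxy); first exact: kD.
    rewrite -Exy {1}Ex {1}Ey addrACA; congr (_ + _).
    by rewrite -big_split /=; apply: eq_bigr => l _; rewrite scalerDl.
  - move=> r x; have [kx [Kx Ex]] := HD x; have [krx [Krx Erx]] := HD (r *: x).
    apply: (uniq _ (fun i => r * D x i) _ (r *: kx) Krx); first exact: kZ.
    rewrite -Erx {1}Ex scalerDr scaler_sumr; congr (_ + _).
    by apply: eq_bigr => l _; rewrite scalerA.
exists (ext v 0), (ext (fun i x => D x i) (fun _ => 0)); split.
- by move=> j Hj; rewrite extE'.
- by move=> i Hi; rewrite extE'.
- move=> i j Hi Hj; rewrite !extE'.
  have [kk [Kk E]] := HD (v (Ordinal Hj)).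
  symmetry; apply: (uniq (fun l => (l == Ordinal Hj)%:R) (D (v (Ordinal Hj))) 0 kk k0 Kk _ (Ordinal Hi)).
  by rewrite -E addr0 (bigD1 (Ordinal Hj)) //= eqxx scale1r big1 ?addr0 // => l /negbTE ->; rewrite scale0r.
Qed.



Lemma chain_dual {R : comNzRingType} {M : lmodType R} (m : R -> Prop) (S : M -> Prop) n :
  noetherian_ring R -> local_ring m ->
  chain_between (ISM m S) (gen S) n -> dual_fam S n.
Proof.
move=> noeth loc [C [H1 H2 H3 H4]].
have mono : forall i j, (i <= j <= n)%N -> forall x, C i x -> C j x.
  move=> i j /andP [/subnK <-]; elim: (j - i)%N => [//|d IH] Hn x /IH h.
  rewrite addSn; apply: (H4 _ Hn).1; apply: h; exact: ltnW.
suff claim : forall k, (k <= n)%N -> exists (v : nat -> M) (f : nat -> M -> R),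
    [/\ forall j, (j < k)%N -> C j.+1 (v j),
        forall i, (i < k)%N -> is_RHom (f i) &
        forall i j, (i < k)%N -> (j < k)%N -> f i (v j) = (i == j)%:R].
  have [v [f [Hv Hf Hd]]] := claim n (leqnn n).
  by exists v, f; split => // j Hj; apply: (H3 j.+1 Hj); exact: Hv.
elim=> [|k IH] Hk.
  by exists (fun _ => 0), (fun _ _ => 0); split.
have [v [f [Hv Hf Hd]]] := IH (ltnW Hk).
have [_ [x [Cx nCx]]] := H4 k Hk.
pose y := x - \sum_(j < k) f j x *: v j.
have Csum : C k (\sum_(j < k) f j x *: v j).
  apply: submod_sum => [|j]; first exact: H1 (ltnW Hk).
  have [_ _ hZ] := H1 k (ltnW Hk); apply: hZ.
  apply: (mono j.+1) (Hv _ (ltn_ord j)); by rewrite ltn_ord (ltnW Hk).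
have Cy : C k.+1 y.
  apply: submodB => //; first exact: H1.
  apply: (mono k) => //; by rewrite leqnSn.
have nCy : ~ C k y.
  move=> h; apply: nCx; rewrite -(subrK (\sum_(j < k) f j x *: v j) x).
  have [_ hD _] := H1 k (ltnW Hk); exact: hD.
have nIy : ~ ISM m S y by move=> h; apply: nCy; apply: H2 => //; exact: ltnW.
have [g [hg ngy]] : exists g, is_RHom g /\ ~ m (g y).
  apply: NNPP => h; apply: nIy; split; first exact: H3 Cy.
  move=> g hg; apply: NNPP => ng; apply: h; by exists g.
have [w Hw] := local_unit noeth loc ngy.
pose vk := w *: y.
have fvk : forall i, (i < k)%N -> f i vk = 0.
  move=> i Hi; rewrite (Hf _ Hi).2 homB ?hom_sum; try exact: Hf.
  rewrite (eq_bigr (fun j : 'I_k => f j x * (i == j :> nat)%:R)); last first.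
    by move=> j _; rewrite (Hf _ Hi).2 Hd.
  by rewrite (delta_sum (fun j => f j x)) // subrr mulr0.
have gvk : g vk = 1 by rewrite hg.2.
pose fk := fun z => g z - \sum_(j < k) g (v j) * f j z.
have hfk : is_RHom fk.
  split.
  - move=> a b; rewrite /fk hg.1.
    rewrite (eq_bigr (fun j : 'I_k => g (v j) * f j a + g (v j) * f j b)); last first.
      by move=> j _; rewrite (Hf _ (ltn_ord j)).1 mulrDr.
    by rewrite big_split /= opprD addrACA.
  - move=> r a; rewrite /fk hg.2 mulrBr mulr_sumr.
    rewrite (eq_bigr (fun j : 'I_k => r * (g (v j) * f j a))) //.
    by move=> j _; rewrite (Hf _ (ltn_ord j)).2 mulrCA.
exists (fun j => if j == k then vk else v j), (fun i => if i == k then fk else f i); split.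
- move=> j; rewrite ltnS leq_eqVlt; case: eqP => [-> _|_ /= Hj].
  + have [_ _ hZ] := H1 k.+1 Hk; exact: hZ.
  + exact: Hv.
- move=> i; rewrite ltnS leq_eqVlt; case: eqP => [_ _ //|_ /= Hi]; exact: Hf.
- move=> i j Hi Hj; rewrite !ltnS in Hi Hj.
  case: (eqVneq i k) => [Ei|nik]; case: (eqVneq j k) => [Ej|njk].
  + rewrite ?Ei ?Ej ?eqxx /fk gvk big1 ?subr0 ?eqxx // => l _.
    by rewrite fvk ?mulr0.
  + have Hj' : (j < k)%N by rewrite ltn_neqAle njk Hj.
    rewrite ?Ei ?eqxx ?(negbTE njk) /fk (eq_bigr (fun l : 'I_k => g (v l) * (l == j :> nat)%:R)).
      by rewrite (delta_sum' (fun l => g (v l))) // subrr ?eqxx ?(eq_sym k j) ?(negbTE njk).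
    by move=> l _; rewrite Hd.
  + have Hi' : (i < k)%N by rewrite ltn_neqAle nik Hi.
    by rewrite ?Ej ?eqxx ?(negbTE nik) fvk // ?(negbTE nik).
  + have Hi' : (i < k)%N by rewrite ltn_neqAle nik Hi.
    have Hj' : (j < k)%N by rewrite ltn_neqAle njk Hj.
    rewrite ?(negbTE nik) ?(negbTE njk); exact: Hd.
Qed.



Lemma no_wide_inverse {R : comNzRingType} g p (B : 'M[R]_(g + p.+1, g)) (A : 'M[R]_(g, g + p.+1)) :
  B *m A = 1%:M -> False.
Proof.
move=> E.
have E2 : row_mx B (0 : 'M[R]_(g + p.+1, p.+1)) *m col_mx A (0 : 'M[R]_(p.+1, g + p.+1)) = 1%:M.
  by rewrite mul_row_col mulmx0 addr0.
have := congr1 determinant E2; rewrite det_mulmx det1.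
rewrite (expand_det_col _ (rshift g (@ord0 p))) big1 ?mul0r.
  by move=> h; have := @oner_neq0 R; rewrite -h eqxx.
by move=> i _; rewrite row_mxEr mxE mul0r.
Qed.

Lemma dual_bound {R : comNzRingType} {M : lmodType R} (S : M -> Prop) g (w : 'I_g -> M) k :
  (forall x, gen (fun y => exists i, y = w i) x) -> dual_fam S k -> (k <= g)%N.
Proof.
move=> Hw [v [f [_ Hf Hd]]].
rewrite leqNgt; apply/negP => Hgk.
have [bf Hbf] : exists bf : nat -> 'I_g -> R, forall j, v j = \sum_l bf j l *: w l.
  apply: (functional_choice (fun j (bf : 'I_g -> R) => v j = \sum_l bf l *: w l)) => j.
  exact: gen_fam.
have [p Hp] : exists p, k = (g + p.+1)%N.
  exists (k - g.+1)%N; by rewrite addnS -addSn subnKC.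
subst k.
apply: (@no_wide_inverse R g p (\matrix_(j, l) bf j l) (\matrix_(l, i) f i (w l))).
apply/matrixP => j i; rewrite !mxE.
under eq_bigr do rewrite !mxE.
rewrite eq_sym -(Hd i j) // Hbf hom_sum; last exact: Hf.
by apply: eq_bigr => l _; rewrite (Hf _ (ltn_ord i)).2.
Qed.



Lemma max_exists (P : nat -> Prop) g :
  P 0%N -> (forall n, P n -> (n <= g)%N) -> exists n, P n /\ forall k, P k -> (k <= n)%N.
Proof.
move=> P0 Hb.
have key : forall b, (exists n, P n /\ forall k, P k -> (k <= n)%N) \/ (exists n, P n /\ (b <= n)%N).
  elim=> [|b [L|[n [Pn Hbn]]]]; [by right; exists 0%N | by left |].
  case: (ltnP b n) => Hbn'; first by right; exists n.
  have Enb : n = b by apply/eqP; rewrite eqn_leq Hbn Hbn'.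
  case: (classic (exists k, P k /\ (b < k)%N)) => [[k [Pk Hk]]|Hno]; first by right; exists k.
  left; exists n; split => // k Pk; rewrite Enb leqNgt; apply/negP => Hk; apply: Hno; by exists k.
case: (key g.+1) => // [[n [Pn Hn]]].
by have := Hb _ Pn; rewrite leqNgt Hn.
Qed.

Theorem lemma3p10 (R : comNzRingType) (m : R -> Prop) (M : lmodType R)
  (S : M -> Prop) :
  noetherian_ring R -> local_ring m -> fin_gen_mod M ->
  exists n : nat, delta_is S n /\ quot_length_is (ISM m S) (gen S) n.
Proof.
move=> noeth loc [g [w Hw]].
have P0 : free_summand_in S 0.
  by apply: dual_free; exists (fun _ => 0), (fun _ _ => 0); split.
have Hb : forall n, free_summand_in S n -> (n <= g)%N.
  by move=> n /free_dual; apply: dual_bound Hw.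
have [n [Pn Hn]] := max_exists P0 Hb.
exists n; split; first by split.
split; first by apply: dual_chain => //; exact: free_dual.
move=> k /(chain_dual noeth loc) /dual_free; exact: Hn.
Qed.
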